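(* Let $B\colon\mathbf{Set}\to\mathbf{Set}$ be a functor, $\Lambda$ a finite set, and $(\tau_\lambda\colon B[0,1]\to[0,1])_{\lambda\in\Lambda}$ functions such that, for every set $Y$, whenever a sequence of functions $k_i\colon Y\to[0,1]$ converges uniformly to $l$, the sequence $\tau_\lambda\circ Bk_i$ converges uniformly to $\tau_\lambda\circ Bl$ for each $\lambda$. Let $X$ be a set and $S\subseteq\mathbf{Set}(X,[0,1])$ such that (i) $S$ contains the constant function $1$ and is closed under $k\mapsto1-k$, pointwise $\min(k,l)$, and $k\mapsto\max(k-q,0)$ for every $q\in\mathbb{Q}\cap[0,1]$; (ii) the pseudometric space $(X,d_S)$ with $d_S(x,y)=\sup_{k\in S}|k(x)-k(y)|$ is totally bounded. Then $S$ is approximating: for every nonexpansive map $h\colon(X,d_S)\to([0,1],d_e)$, every $\lambda\in\Lambda$ and all $z,w\in BX$, $\sup_{k\in S,\lambda'\in\Lambda}|\tau_{\lambda'}(Bk(z))-\tau_{\lambda'}(Bk(w))|\ge|\tau_\lambda(Bh(z))-\tau_\lambda(Bh(w))|$.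
   Context: $d_e$ is the Euclidean metric on $[0,1]$. A pseudometric space $(X,d)$ is totally bounded if for every $\varepsilon>0$ there is a finite $F\subseteq X$ such that every $x\in X$ has some $y\in F$ with $d(x,y)<\varepsilon$. *)

(* Defs.v *)
From HB Require Import structures.
From mathcomp Require Import all_boot all_order all_algebra.
From mathcomp Require Import all_classical all_reals.
Set Implicit Arguments. Unset Strict Implicit. Unset Printing Implicit Defensive.
Import Order.TTheory GRing.Theory Num.Theory.
Local Open Scope classical_set_scope.
Local Open Scope ring_scope.

Record SetFunctor := {
  Fobj :> Type -> Type;
  Fmap : forall (A C : Type), (A -> C) -> Fobj A -> Fobj C;
  Fmap_id : forall A (z : Fobj A), Fmap (fun a : A => a) z = z;
  Fmap_comp : forall A C D (f : A -> C) (g : C -> D) (z : Fobj A),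
      Fmap (fun a => g (f a)) z = Fmap g (Fmap f z) }.

Definition I01 (R : realType) : Type := {x : R | (0 <= x <= 1)}.
Definition ival (R : realType) (x : I01 R) : R := proj1_sig x.

Definition unif_cvg (R : realType) (Y : Type) (k : nat -> Y -> I01 R) (l : Y -> I01 R) :=
  forall eps : R, 0 < eps -> exists N : nat, forall n, (N <= n)%N ->
    forall y, `|ival (k n y) - ival (l y)| < eps.

Definition dS (R : realType) (X : Type) (S : set (X -> I01 R)) (x y : X) : R :=
  sup [set r | exists k, S k /\ r = `|ival (k x) - ival (k y)|].

Definition totally_bounded_pm (X : Type) (R : realType) (d : X -> X -> R) :=
  forall eps : R, 0 < eps -> exists F : set X, finite_set F /\
    forall x, exists y, F y /\ d x y < eps.
Arguments Fmap s {A C} _ _.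

(* Main.v *)
Require Import Defs.
From HB Require Import structures.
From mathcomp Require Import all_boot all_order all_algebra.
From mathcomp Require Import all_classical all_reals.
From mathcomp Require Import lra.
Set Implicit Arguments. Unset Strict Implicit. Unset Printing Implicit Defensive.
Import Order.TTheory GRing.Theory Num.Theory.
Local Open Scope classical_set_scope.
Local Open Scope ring_scope.

Lemma ival01 (R : realType) (x : I01 R) : 0 <= ival x /\ ival x <= 1.
Proof. by case: x => v /= /andP[]. Qed.

Lemma absLe (R : realType) (x e : R) : `|x| <= e -> -e <= x /\ x <= e.
Proof. by rewrite ler_norml => /andP. Qed.
Lemma absLt (R : realType) (x e : R) : `|x| < e -> -e < x /\ x < e.
Proof. by rewrite ltr_norml => /andP. Qed.
Lemma absLeI (R : realType) (x e : R) : -e <= x -> x <= e -> `|x| <= e.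
Proof. by move=> *; rewrite ler_norml; apply/andP. Qed.
Lemma absLtI (R : realType) (x e : R) : -e < x -> x < e -> `|x| < e.
Proof. by move=> *; rewrite ltr_norml; apply/andP. Qed.

Definition inS (R : realType) (X : Type) (S : set (X -> I01 R)) (f : X -> R) :=
  exists k, S k /\ forall x, ival (k x) = f x.
Arguments inS {R X} S f.

Lemma inS01 (R : realType) (X : Type) (S : set (X -> I01 R)) f :
  inS S f -> forall x, 0 <= f x /\ f x <= 1.
Proof. by move=> [k [_ Hk]] x; rewrite -Hk; apply: ival01. Qed.

Lemma rat_approx (R : realType) (y eps : R) : 0 <= y -> y <= 1 -> 0 < eps ->
  exists q : rat, (0 <= q <= 1) /\ `|ratr q - y| < eps.
Proof.
move=> y0 y1 e0; case: (ltP y eps) => Hy.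
  exists 0; split; first by [].
  by rewrite rmorph0; apply: absLtI; lra.
have : y - eps < y by lra.
move=> /rat_in_itvoo [q Hq]; rewrite in_itv /= in Hq; case/andP: Hq => H1 H2.
exists q; split; last by apply: absLtI; lra.
apply/andP; split; rewrite -(ler_rat R) ?rmorph0 ?rmorph1; lra.
Qed.

Lemma inS_const (R : realType) (X : Type) (S : set (X -> I01 R))
  (S1 : exists k, S k /\ forall x, ival (k x) = 1)
  (Strunc : forall (q : rat), 0 <= q <= 1 -> forall k, S k ->
      exists m, S m /\ forall x, ival (m x) = Num.max (ival (k x) - ratr q) 0)
  (r : rat) : 0 <= r <= 1 -> inS S (fun _ => ratr r).
Proof.
move=> /andP[r0 r1]; case: S1 => k1 [Sk1 Hk1].
have q01 : 0 <= 1 - r <= 1 by apply/andP; split; lra.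
have [m [Sm Hm]] := Strunc _ q01 _ Sk1.
exists m; split => // x; rewrite Hm Hk1 rmorphB rmorph1.
have : (ratr 0 : R) <= ratr r by rewrite ler_rat.
rewrite rmorph0 => H.
case: leP => ?; lra.
Qed.

Lemma inS_1 (R : realType) (X : Type) (S : set (X -> I01 R))
  (S1 : exists k, S k /\ forall x, ival (k x) = 1) : inS S (fun _ => 1).
Proof. by case: S1 => k [? ?]; exists k. Qed.

Lemma inS_min (R : realType) (X : Type) (S : set (X -> I01 R))
  (Smin : forall k l, S k -> S l ->
      exists m, S m /\ forall x, ival (m x) = Num.min (ival (k x)) (ival (l x)))
  f g : inS S f -> inS S g -> inS S (fun x => Num.min (f x) (g x)).
Proof.
move=> [k [Sk Hk]] [l [Sl Hl]]; have [m [Sm Hm]] := Smin _ _ Sk Sl.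
by exists m; split => // x; rewrite Hm Hk Hl.
Qed.

Lemma inS_compl (R : realType) (X : Type) (S : set (X -> I01 R))
  (Scompl : forall k, S k -> exists k', S k' /\ forall x, ival (k' x) = 1 - ival (k x))
  f : inS S f -> inS S (fun x => 1 - f x).
Proof.
move=> [k [Sk Hk]]; have [m [Sm Hm]] := Scompl _ Sk.
by exists m; split => // x; rewrite Hm Hk.
Qed.

Lemma inS_max (R : realType) (X : Type) (S : set (X -> I01 R))
  (Scompl : forall k, S k -> exists k', S k' /\ forall x, ival (k' x) = 1 - ival (k x))
  (Smin : forall k l, S k -> S l ->
      exists m, S m /\ forall x, ival (m x) = Num.min (ival (k x)) (ival (l x)))
  f g : inS S f -> inS S g -> inS S (fun x => Num.max (f x) (g x)).
Proof.
move=> Hf Hg.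
have := inS_compl Scompl (inS_min Smin (inS_compl Scompl Hf) (inS_compl Scompl Hg)).
move=> [k [Sk Hk]]; exists k; split => // x; rewrite Hk.
case: (leP (f x) (g x)) => ?; case: leP => ?; lra.
Qed.

Lemma inS_down (R : realType) (X : Type) (S : set (X -> I01 R))
  (Strunc : forall (q : rat), 0 <= q <= 1 -> forall k, S k ->
      exists m, S m /\ forall x, ival (m x) = Num.max (ival (k x) - ratr q) 0)
  (q : rat) f : 0 <= q <= 1 -> inS S f -> inS S (fun x => Num.max (f x - ratr q) 0).
Proof.
move=> q01 [k [Sk Hk]]; have [m [Sm Hm]] := Strunc _ q01 _ Sk.
by exists m; split => // x; rewrite Hm Hk.
Qed.

Lemma inS_up (R : realType) (X : Type) (S : set (X -> I01 R))
  (Scompl : forall k, S k -> exists k', S k' /\ forall x, ival (k' x) = 1 - ival (k x))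
  (Strunc : forall (q : rat), 0 <= q <= 1 -> forall k, S k ->
      exists m, S m /\ forall x, ival (m x) = Num.max (ival (k x) - ratr q) 0)
  (q : rat) f : 0 <= q <= 1 -> inS S f -> inS S (fun x => Num.min (f x + ratr q) 1).
Proof.
move=> q01 Hf.
have := inS_compl Scompl (inS_down Strunc q01 (inS_compl Scompl Hf)).
move=> [k [Sk Hk]]; exists k; split => // x; rewrite Hk.
case: leP => ?; case: leP => ?; lra.
Qed.

Lemma foldr_min_inS (R : realType) (X : Type) (S : set (X -> I01 R))
  (S1 : exists k, S k /\ forall x, ival (k x) = 1)
  (Smin : forall k l, S k -> S l ->
      exists m, S m /\ forall x, ival (m x) = Num.min (ival (k x)) (ival (l x)))
  (T : Type) (F : T -> X -> R) (s : seq T) : (forall b, inS S (F b)) ->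
  inS S (fun x => foldr (fun b acc => Num.min (F b x) acc) 1 s).
Proof.
move=> HF; elim: s => [|b s IH] /=; first exact: inS_1.
exact: (inS_min Smin (HF b) IH).
Qed.

Lemma foldr_max_inS (R : realType) (X : Type) (S : set (X -> I01 R))
  (S1 : exists k, S k /\ forall x, ival (k x) = 1)
  (Scompl : forall k, S k -> exists k', S k' /\ forall x, ival (k' x) = 1 - ival (k x))
  (Smin : forall k l, S k -> S l ->
      exists m, S m /\ forall x, ival (m x) = Num.min (ival (k x)) (ival (l x)))
  (Strunc : forall (q : rat), 0 <= q <= 1 -> forall k, S k ->
      exists m, S m /\ forall x, ival (m x) = Num.max (ival (k x) - ratr q) 0)
  (T : Type) (F : T -> X -> R) (s : seq T) : (forall b, inS S (F b)) ->
  inS S (fun x => foldr (fun b acc => Num.max (F b x) acc) 0 s).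
Proof.
move=> HF; elim: s => [|b s IH] /=.
  have := inS_const S1 Strunc (r := 0) isT; rewrite rmorph0; exact.
exact: (inS_max Scompl Smin (HF b) IH).
Qed.

Lemma foldr_min_ge (R : realType) (T : Type) (F : T -> R) (s : seq T) (c : R) :
  c <= 1 -> (forall b, c <= F b) -> c <= foldr (fun b acc => Num.min (F b) acc) 1 s.
Proof.
move=> c1 HF; elim: s => [|b s IH] //=.
by rewrite le_min HF IH.
Qed.

Lemma foldr_max_le (R : realType) (T : Type) (F : T -> R) (s : seq T) (c : R) :
  0 <= c -> (forall b, F b <= c) -> foldr (fun b acc => Num.max (F b) acc) 0 s <= c.
Proof.
move=> c1 HF; elim: s => [|b s IH] //=.
by rewrite ge_max HF IH.
Qed.

Lemma foldr_min_le (R : realType) (T : eqType) (F : T -> R) (s : seq T) b :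
  b \in s -> foldr (fun b acc => Num.min (F b) acc) 1 s <= F b.
Proof.
elim: s => [|a s IH] //=; rewrite in_cons => /orP[/eqP <-|H].
  by rewrite ge_min lexx.
by rewrite ge_min IH ?orbT.
Qed.

Lemma foldr_max_ge (R : realType) (T : eqType) (F : T -> R) (s : seq T) b :
  b \in s -> F b <= foldr (fun b acc => Num.max (F b) acc) 0 s.
Proof.
elim: s => [|a s IH] //=; rewrite in_cons => /orP[/eqP <-|H].
  by rewrite le_max lexx.
by rewrite le_max IH ?orbT.
Qed.

Lemma abs01 (R : realType) (a b : I01 R) : `|ival a - ival b| <= 1.
Proof. have := ival01 a; have := ival01 b => *; apply: absLeI; lra. Qed.

Lemma dS_hassup (R : realType) (X : Type) (S : set (X -> I01 R)) k x y :
  S k -> has_sup [set r | exists k, S k /\ r = `|ival (k x) - ival (k y)|].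
Proof.
move=> Sk; split; first by exists `|ival (k x) - ival (k y)|; exists k.
by exists 1 => r [k' [_ ->]]; apply: abs01.
Qed.

Lemma dS_lip (R : realType) (X : Type) (S : set (X -> I01 R)) k x y :
  S k -> `|ival (k x) - ival (k y)| <= dS S x y.
Proof.
move=> Sk; apply: (sup_upper_bound (dS_hassup x y Sk)).
by exists k.
Qed.

Lemma pair_approx (R : realType) (X : Type) (S : set (X -> I01 R))
  (S1 : exists k, S k /\ forall x, ival (k x) = 1)
  (Scompl : forall k, S k -> exists k', S k' /\ forall x, ival (k' x) = 1 - ival (k x))
  (Strunc : forall (q : rat), 0 <= q <= 1 -> forall k, S k ->
      exists m, S m /\ forall x, ival (m x) = Num.max (ival (k x) - ratr q) 0)
  (h : X -> I01 R) :
  (forall x y, `|ival (h x) - ival (h y)| <= dS S x y) ->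
  forall e : R, 0 < e -> forall a b : X, exists g, inS S g /\
    ival (h a) - 2 * e <= g a /\ g b <= ival (h b) + 2 * e.
Proof.
move=> hlip e e0 a b.
have [ha0 ha1] := ival01 (h a); have [hb0 hb1] := ival01 (h b).
case: (leP (ival (h a)) (ival (h b))) => Hab.
  have [r [r01 Hr]] := rat_approx ha0 ha1 e0.
  have [Hr1 Hr2] := absLt Hr.
  exists (fun _ => ratr r); split; first exact: inS_const.
  split; lra.
case: S1 => k1 [Sk1 _].
have [r [k [Sk ->]] Hr] := sup_adherent e0 (dS_hassup a b Sk1).
have Hd := absLe (hlip a b).
have [k' [Sk' Hk']] : exists k', S k' /\
    ival (k' a) - ival (k' b) = `|ival (k a) - ival (k b)|.
  case: (lerP 0 (ival (k a) - ival (k b))) => H.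
    by exists k; split => //; rewrite ger0_norm.
  have [m [Sm Hm]] := Scompl _ Sk; exists m; split => //.
  by rewrite ltr0_norm // !Hm; lra.
rewrite -Hk' -/(dS S a b) in Hr.
have [u0 u1] := ival01 (k' a); have [v0 v1] := ival01 (k' b).
have Hk'S : inS S (fun x => ival (k' x)) by exists k'.
case: (lerP 0 (ival (h a) - ival (k' a))) => Hc.
  have [q [q01 Hq]] := rat_approx (y := ival (h a) - ival (k' a)) Hc ltac:(lra) e0.
  have [Hq1 Hq2] := absLt Hq.
  exists (fun x => Num.min (ival (k' x) + ratr q) 1); split.
    exact: (inS_up Scompl Strunc q01 Hk'S).
  split.
    by rewrite le_min; apply/andP; split; lra.
  rewrite ge_min; apply/orP; left; lra.
have Hc' : 0 <= ival (k' a) - ival (h a) by lra.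
have [q [q01 Hq]] := rat_approx (y := ival (k' a) - ival (h a)) Hc' ltac:(lra) e0.
have [Hq1 Hq2] := absLt Hq.
exists (fun x => Num.max (ival (k' x) - ratr q) 0); split.
  exact: (inS_down Strunc q01 Hk'S).
split.
  by rewrite le_max; apply/orP; left; lra.
by rewrite ge_max; apply/andP; split; lra.
Qed.

Lemma approx (R : realType) (X : Type) (S : set (X -> I01 R))
  (S1 : exists k, S k /\ forall x, ival (k x) = 1)
  (Scompl : forall k, S k -> exists k', S k' /\ forall x, ival (k' x) = 1 - ival (k x))
  (Smin : forall k l, S k -> S l ->
      exists m, S m /\ forall x, ival (m x) = Num.min (ival (k x)) (ival (l x)))
  (Strunc : forall (q : rat), 0 <= q <= 1 -> forall k, S k ->
      exists m, S m /\ forall x, ival (m x) = Num.max (ival (k x) - ratr q) 0)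
  (Stb : totally_bounded_pm (dS S)) (h : X -> I01 R) :
  (forall x y, `|ival (h x) - ival (h y)| <= dS S x y) ->
  forall eps : R, 0 < eps -> exists k, S k /\
    forall x, `|ival (k x) - ival (h x)| < eps.
Proof.
move=> hlip eps eps0.
pose e := eps / 4; have e0 : 0 < e by rewrite /e; lra.
have /choice [G HG] : forall p : X * X, exists g, inS S g /\
    ival (h p.1) - 2 * e <= g p.1 /\ g p.2 <= ival (h p.2) + 2 * e.
  by move=> [a b]; exact: pair_approx.
have [F [/(@finite_seqP {classic X}) [s Fs] HF]] := Stb e e0.
pose Gi (a : X) (x : X) := foldr (fun b acc => Num.min (G (a, b) x) acc) 1 s.
pose f (x : X) := foldr (fun a acc => Num.max (Gi a x) acc) 0 s.
have Gin : forall a, inS S (Gi a).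
  move=> a; apply: (foldr_min_inS S1 Smin (F := fun b => G (a, b))).
  by move=> b; case: (HG (a, b)).
have fin : inS S f by apply: (foldr_max_inS S1 Scompl Smin Strunc (F := Gi)).
case: fin => k [Sk Hk]; exists k; split => // x.
have [y [Fy Hxy]] := HF x.
have ys : (y : {classic X}) \in s by rewrite Fs in Fy.
have Hlo : ival (h y) - 2 * e <= f y.
  apply: le_trans (@foldr_max_ge R {classic X} (fun a => Gi a y) s y ys).
  rewrite /Gi; apply: foldr_min_ge.
    by have := ival01 (h y) => *; lra.
  by move=> b; case: (HG (y, b)) => _ [].
have Hhi : f y <= ival (h y) + 2 * e.
  apply: foldr_max_le.
    by have := ival01 (h y) => *; lra.
  move=> a; apply: le_trans (@foldr_min_le R {classic X} (fun b => G (a, b) y) s y ys) _.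
  by case: (HG (a, y)) => _ [].
have [H1 H2] := absLe (dS_lip x y Sk).
have [H3 H4] := absLe (hlip x y).
rewrite !Hk in H1 H2 Hlo Hhi *.
have He : e * 4 = eps by rewrite /e; lra.
clearbody e; apply: absLtI; lra.
Qed.

Theorem propositionV6 (R : realType) (B : SetFunctor) (Lam : finType)
  (tau : Lam -> B (I01 R) -> I01 R)
  (htau : forall (Y : Type) (k : nat -> Y -> I01 R) (l : Y -> I01 R),
      unif_cvg k l -> forall lam : Lam,
      unif_cvg (fun n => fun z : B Y => tau lam (Fmap B (k n) z))
               (fun z : B Y => tau lam (Fmap B l z)))
  (X : Type) (S : set (X -> I01 R))
  (S1 : exists k, S k /\ forall x, ival (k x) = 1)
  (Scompl : forall k, S k -> exists k', S k' /\ forall x, ival (k' x) = 1 - ival (k x))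
  (Smin : forall k l, S k -> S l ->
      exists m, S m /\ forall x, ival (m x) = Num.min (ival (k x)) (ival (l x)))
  (Strunc : forall (q : rat), 0 <= q <= 1 -> forall k, S k ->
      exists m, S m /\ forall x, ival (m x) = Num.max (ival (k x) - ratr q) 0)
  (Stb : totally_bounded_pm (dS S)) :
  forall h : X -> I01 R,
    (forall x y, `|ival (h x) - ival (h y)| <= dS S x y) ->
  forall (lam : Lam) (z w : B X),
    `|ival (tau lam (Fmap B h z)) - ival (tau lam (Fmap B h w))|
    <= sup [set r | exists k lam', S k /\
              r = `|ival (tau lam' (Fmap B k z)) - ival (tau lam' (Fmap B k w))|].
Proof.
move=> h hlip lam z w.
have /choice [K HK] : forall n : nat, exists k, S k /\
    forall x, `|ival (k x) - ival (h x)| < (n.+1%:R : R)^-1.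
  move=> n; apply: (approx S1 Scompl Smin Strunc Stb hlip).
  by rewrite invr_gt0 ltr0Sn.
have cvg : unif_cvg K h.
  move=> eps eps0; exists (Num.Def.truncn (eps^-1)) => n Hn x.
  apply: lt_le_trans (proj2 (HK n) x) _.
  have Hp : (n.+1%:R : R) \is Num.pos by rewrite posrE ltr0Sn.
  have Hep : eps \is Num.pos by rewrite posrE.
  apply/ltW; rewrite invf_plt //.
  apply: lt_le_trans (truncnS_gt _) _.
  by rewrite ler_nat ltnS.
set E := [set r | _].
have hsE : has_sup E.
  split.
    case: S1 => k1 [Sk1 _].
    by exists `|ival (tau lam (Fmap B k1 z)) - ival (tau lam (Fmap B k1 w))|; exists k1, lam.
  by exists 1 => r [k [lam' [_ ->]]]; apply: abs01.
rewrite leNgt; apply/negP => Hlt.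
set L := `|_ - _| in Hlt.
have d0 : 0 < (L - sup E) / 2 by lra.
have [N HN] := htau _ _ _ cvg lam _ d0.
have Hz := absLt (HN N (leqnn N) z).
have Hw := absLt (HN N (leqnn N) w).
have HE : E `|ival (tau lam (Fmap B (K N) z)) - ival (tau lam (Fmap B (K N) w))|.
  by exists (K N), lam; split => //; case: (HK N).
have Hub := sup_upper_bound hsE HE.
move: Hub Hz Hw.
set a := ival (tau lam (Fmap B (K N) z)); set b := ival (tau lam (Fmap B (K N) w)).
set c := ival (tau lam (Fmap B h z)); set d := ival (tau lam (Fmap B h w)).
move=> Hub [Hz1 Hz2] [Hw1 Hw2].
have HL : L = `|c - d| by [].
clearbody L. move: HL Hub.
case: (lerP 0 (c - d)) => H1; [rewrite (ger0_norm H1) | rewrite (ltr0_norm H1)];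
case: (lerP 0 (a - b)) => H2; [rewrite (ger0_norm H2) | rewrite (ltr0_norm H2) | rewrite (ger0_norm H2) | rewrite (ltr0_norm H2)]; lra.
Qed.
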